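(* Let $f$ and $g$ be L-additive arithmetic functions whose associated completely multiplicative functions $h_f$, $h_g$ are nonzero-valued, with generalized von Mangoldt functions $\Lambda_f,\Lambda_g$. Then for every positive integer $n$: $(\Lambda_f\ast\Lambda_g)(n)=\frac{(\alpha-1)f(p)g(p)}{h_f(p)h_g(p)}$ if $n=p^\alpha$ for a prime $p$ and integer $\alpha\geq1$; $(\Lambda_f\ast\Lambda_g)(n)=\frac{f(p)g(q)}{h_f(p)h_g(q)}+\frac{f(q)g(p)}{h_f(q)h_g(p)}$ if $n=p^\alpha q^\beta$ for distinct primes $p,q$ and integers $\alpha,\beta\geq1$; and $(\Lambda_f\ast\Lambda_g)(n)=0$ otherwise.
   Context: An arithmetic function $f:\mathbb{N}\to\mathbb{C}$ is L-additive if there is a completely multiplicative function $h_f$ such that $f(mn)=f(m)h_f(n)+f(n)h_f(m)$ for all positive integers $m,n$; such an $h_f$ is fixed (likewise $h_g$ for $g$). $\Lambda_f(n)=\frac{f(p)}{h_f(p)}$ if $n=p^k$ for some prime $p$ and integer $k\geq1$, and $0$ otherwise (similarly $\Lambda_g$). $\ast$ is Dirichlet convolution $(F\ast G)(n)=\sum_{d\mid n}F(d)G(n/d)$. *)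

(* Defs.v *)
From mathcomp Require Import all_boot all_order all_algebra.
From mathcomp Require Import Rstruct complex.
Set Implicit Arguments. Unset Strict Implicit. Unset Printing Implicit Defensive.
Import GRing.Theory Num.Theory.
Local Open Scope ring_scope.

Definition CC : fieldType := (Rdefinitions.R : rcfType)[i].

(* Arithmetic functions N -> C are modelled as nat -> CC; the value at 0 is
   irrelevant and all hypotheses quantify over positive integers only. *)

Definition completely_multiplicative (h : nat -> CC) : Prop :=
  h 1%N = 1 /\ forall m n : nat, (0 < m)%N -> (0 < n)%N -> h (m * n)%N = h m * h n.

Definition L_additive_wrt (f h : nat -> CC) : Prop :=
  completely_multiplicative h /\
  forall m n : nat, (0 < m)%N -> (0 < n)%N -> f (m * n)%N = f m * h n + f n * h m.

Definition is_prime_power (n : nat) : bool :=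
  [exists p : 'I_n.+1, exists k : 'I_n.+1, [&& prime p, (0 < k)%N & n == (p ^ k)%N]].

(* Generalized von Mangoldt function: Lambda_f(n) = f(p)/h_f(p) if n = p^k (p prime,
   k >= 1), 0 otherwise.  For such n, the prime p is pdiv n (the smallest prime divisor). *)
Definition vonMangoldt (f h : nat -> CC) (n : nat) : CC :=
  if is_prime_power n then f (pdiv n) / h (pdiv n) else 0.

Definition dconv (F G : nat -> CC) (n : nat) : CC :=
  \sum_(d <- divisors n) F d * G (n %/ d)%N.

(* Main.v *)
Require Import Defs.
From mathcomp Require Import all_boot all_order all_algebra.
From mathcomp Require Import zify ring.
Import GRing.Theory Num.Theory.
Local Open Scope ring_scope.

Lemma ippP (n : nat) :
  reflect (exists p k, [/\ prime p, (0 < k)%N & n = (p ^ k)%N]) (is_prime_power n).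
Proof.
apply: (iffP existsP).
- case=> p /existsP [k /and3P [pp k0 /eqP ->]]; by exists p, k.
- case=> p [k [pp k0 ->]].
  have p1 := prime_gt1 pp.
  have Hp : (p < (p ^ k).+1)%N.
    case: k k0 => // k _; rewrite expnS ltnS leq_pmulr // expn_gt0; lia.
  have Hk : (k < (p ^ k).+1)%N by apply: ltnW; rewrite ltnS ltn_expl.
  exists (Ordinal Hp); apply/existsP; exists (Ordinal Hk) => /=.
  by rewrite pp k0 eqxx.
Qed.

Lemma vM1 (f h : nat -> CC) : vonMangoldt f h 1 = 0.
Proof.
rewrite /vonMangoldt; case: ippP => // [[p [k [pp k0 e]]]].
have p1 := prime_gt1 pp.
have : (1 < p ^ k)%N by rewrite -(exp1n k) ltn_exp2r.
by rewrite -e.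
Qed.

Lemma vMpk (f h : nat -> CC) p k : prime p -> (0 < k)%N ->
  vonMangoldt f h (p ^ k) = f p / h p.
Proof.
move=> pp k0; rewrite /vonMangoldt; case: ippP => [_|[]]; last by exists p, k.
by case: k k0 => // k _; rewrite pdiv_pfactor.
Qed.

Lemma vMnz (f h : nat -> CC) d : vonMangoldt f h d != 0 ->
  exists p k, [/\ prime p, (0 < k)%N & d = (p ^ k)%N].
Proof. rewrite /vonMangoldt; case: ippP => //; by rewrite eqxx. Qed.

Lemma logn2 t x y a b : prime x -> prime y ->
  logn t (x ^ a * y ^ b) = (a * (t == x) + b * (t == y))%N.
Proof.
move=> px py; rewrite lognM ?expn_gt0 ?prime_gt0 // !lognX !logn_prime //.
Qed.

Lemma alg1 (K : fieldType) (c x y u v : K) :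
  c * (x / u * (y / v)) = c * 1 * x * y * (u^-1 / v).
Proof. ring. Qed.

Lemma sum2 (K : fieldType) (r : seq nat) x y (F : nat -> K) :
  uniq r -> x \in r -> y \in r -> y != x ->
  (forall i, i \in r -> i != x -> i != y -> F i = 0) ->
  \sum_(i <- r) F i = F x + F y.
Proof.
move=> ur xr yr yx H.
rewrite (bigD1_seq x) //= -big_filter (bigD1_seq y) ?filter_uniq ?mem_filter ?yx //=.
rewrite big1_seq ?addr0 // => i /andP [iy]; rewrite mem_filter => /andP [ix ir].
exact: H.
Qed.

Lemma alg2 (K : fieldType) (x y z t u v w o : K) :
  x / u * (y / v) + z / w * (t / o) = x * y / (u * v) + z * t / (w * o).
Proof. rewrite !invfM; ring. Qed.

Lemma sum0 (K : fieldType) (r : seq nat) (F : nat -> K) :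
  (forall i, i \in r -> F i = 0) -> \sum_(i <- r) F i = 0.
Proof. by move=> H; rewrite big1_seq // => i /andP [_ /H]. Qed.

Section Main.
Variables (f g hf hg : nat -> CC).
Let F n d := vonMangoldt f hf d * vonMangoldt g hg (n %/ d)%N.

Lemma nz_split n d : (0 < n)%N -> d \in divisors n -> F n d != 0 ->
  exists r i s j, [/\ prime r, prime s, (0 < i)%N & (0 < j)%N] /\
    [/\ d = (r ^ i)%N, (n %/ d)%N = (s ^ j)%N & n = (r ^ i * s ^ j)%N].
Proof.
move=> n0 dn; rewrite /F mulf_eq0 negb_or => /andP [/vMnz [r [i [pr i0 ed]]]
  /vMnz [s [j [ps j0 ej]]]].
exists r, i, s, j; split => //; split => //.
rewrite -ed -ej mulnC divnK //; by rewrite dvdn_divisors.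
Qed.

End Main.

Theorem theorem2p5 (f g hf hg : nat -> CC)
  (Hf : L_additive_wrt f hf) (Hg : L_additive_wrt g hg)
  (hf_nz : forall n : nat, (0 < n)%N -> hf n != 0)
  (hg_nz : forall n : nat, (0 < n)%N -> hg n != 0)
  (n : nat) (n_pos : (0 < n)%N) :
  (forall (p a : nat), prime p -> (0 < a)%N -> n = (p ^ a)%N ->
     dconv (vonMangoldt f hf) (vonMangoldt g hg) n
     = (a.-1)%:R * f p * g p / (hf p * hg p)) /\
  (forall (p q a b : nat), prime p -> prime q -> p != q -> (0 < a)%N -> (0 < b)%N ->
     n = (p ^ a * q ^ b)%N ->
     dconv (vonMangoldt f hf) (vonMangoldt g hg) n
     = f p * g q / (hf p * hg q) + f q * g p / (hf q * hg p)) /\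
  ((~ exists p a : nat, [/\ prime p, (0 < a)%N & n = (p ^ a)%N]) ->
   (~ exists p q a b : nat,
        [/\ prime p, prime q, p != q, (0 < a)%N & (0 < b)%N] /\ n = (p ^ a * q ^ b)%N) ->
   dconv (vonMangoldt f hf) (vonMangoldt g hg) n = 0).
Proof.
have NZ := fun d => @nz_split f g hf hg n d n_pos.
split; [|split].
- move=> p a pp a0 en.
  have p1 := prime_gt1 pp.
  rewrite /dconv (perm_big [seq (p ^ i)%N | i <- index_iota 0 a.+1]); last first.
    apply: uniq_perm; first exact: divisors_uniq.
      by rewrite map_inj_uniq ?iota_uniq //; apply: expnI.
    move=> d; rewrite -dvdn_divisors // en.
    apply/dvdn_pfactor/mapP => // -[m].
      by move=> le ->; exists m => //; rewrite mem_index_iota.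
    by rewrite mem_index_iota => /andP [_ le] ->; exists m.
  rewrite big_map en big_nat_recl // expn0 vM1 mul0r.
  idtac.
  case: a a0 en => // a' _ en.
  rewrite big_nat_recr //= divnn expn_gt0 prime_gt0 // vM1 mulr0 addr0.
  rewrite (eq_big_nat _ _ (F2 := fun _ => f p / hf p * (g p / hg p))); last first.
    move=> i /andP [_ lt]; rewrite -expnB ?prime_gt0 //; last by lia.
    by rewrite !vMpk //; lia.
  rewrite sumr_const_nat subn0 -mulr_natl /= invfM.
  have A0 : forall x : CC, 0 + x = x by move=> x; rewrite add0r.
  rewrite A0 -[_ *+ a']mulr_natl.
 exact: (@alg1 CC).
- move=> p q a b pp pq neq a0 b0 en.
  have pa_in : (p ^ a)%N \in divisors n by rewrite -dvdn_divisors // en dvdn_mulr.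
  have qb_in : (q ^ b)%N \in divisors n by rewrite -dvdn_divisors // en dvdn_mull.
  have ne : (q ^ b)%N != (p ^ a)%N.
    apply/eqP => /(congr1 (logn p)); rewrite !lognX !logn_prime // eqxx (negbTE neq).
    lia.
  rewrite /dconv (@sum2 CC _ (p ^ a)%N (q ^ b)%N) ?divisors_uniq //; last first.
    move=> d dn d1 d2; apply/eqP; apply: contraNT d1 => /NZ.
    move=> /(_ dn) [r [i [s [j [[pr ps i0 j0] [ed _ en']]]]]].
    have nqp : q != p by rewrite eq_sym.
    have Lp : a = (i * (p == r) + j * (p == s))%N.
      by rewrite -(logn2 p r s i j pr ps) -en' en logn2 // eqxx (negbTE neq) /=; lia.
    have Lq : b = (i * (q == r) + j * (q == s))%N.
      by rewrite -(logn2 q r s i j pr ps) -en' en logn2 // eqxx (negbTE nqp) /=; lia.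
    rewrite ed; case: (eqVneq p r) => [epr|npr].
      rewrite -epr in Lq Lp *; rewrite (negbTE nqp) /= in Lq.
      case: (eqVneq q s) => [eqs|nqs]; last by move: Lq; rewrite (negbTE nqs) /=; lia.
      rewrite -eqs (negbTE neq) eqxx /= in Lp.
      have -> : a = i by lia.
      by [].
    case: (eqVneq p s) => [eps|nps]; last by move: Lp; rewrite (negbTE npr) (negbTE nps) /=; lia.
    rewrite -eps (negbTE nqp) in Lq.
    case: (eqVneq q r) => [eqr|nqr]; last by move: Lq; rewrite (negbTE nqr) /=; lia.
    rewrite -eqr /= in Lq ed d2 *.
    have ebi : b = i by lia.
    by rewrite ed ebi eqxx in d2.
  rewrite en mulKn ?expn_gt0 ?prime_gt0 // mulnK ?expn_gt0 ?prime_gt0 // !vMpk //.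
  exact: (@alg2 CC).
- move=> H1 H2; rewrite /dconv (@sum0 CC) // => d dn; apply/eqP; apply: contraT => nz.
  have [r [i [s [j [[pr ps i0 j0] [_ _ en']]]]]] := NZ d dn nz.
  case: (eqVneq r s) => [ers|nrs].
    exfalso; apply: H1; exists r, (i + j)%N; split; [exact: pr | by rewrite addn_gt0 i0 |].
    by rewrite en' -ers expnD.
  by exfalso; apply: H2; exists r, s, i, j; split; [split|].
Qed.
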